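(* Let $\sigma:\mathbb{Z}^2\times\mathbb{Z}^2\to U(1)$ be $\sigma((n,m),(n',m'))=\exp(-2\pi i(\xi_1 nm'+\xi_2 mn'))$ with $\xi_2=\theta/2=-\xi_1$. Then the map $\tilde\sigma:(\mathbb{Z}^2\rtimes_{\varphi_\epsilon}\mathbb{Z})\times(\mathbb{Z}^2\rtimes_{\varphi_\epsilon}\mathbb{Z})\to U(1)$, $$\tilde\sigma((n,m,k),(n',m',k')) := \sigma\big((n,m),(n',m')\varphi_\epsilon^k\big),$$ is a multiplier on the group $\mathbb{Z}^2\rtimes_{\varphi_\epsilon}\mathbb{Z}$.
   Context: Let $\mathbb{K}$ be a real quadratic field, $\theta\in\mathbb{K}\setminus\mathbb{Q}$ (regarded as a real number via a fixed real embedding), and let $\epsilon$ be a totally positive unit of $\mathbb{K}$ with $\epsilon(\mathbb{Z}+\mathbb{Z}\theta)=\mathbb{Z}+\mathbb{Z}\theta$. Write $\epsilon=a+b\theta$ and $\epsilon\theta=c+d\theta$ with $a,b,c,d\in\mathbb{Z}$ and set $\varphi_\epsilon=\begin{pmatrix}a&b\\c&d\end{pmatrix}$, which lies in $\mathrm{SL}_2(\mathbb{Z})$. The group $\mathbb{Z}^2\rtimes_{\varphi_\epsilon}\mathbb{Z}$ consists of triples $(n,m,k)$, with elements of $\mathbb{Z}^2$ written as row vectors, and product $((n,m),k)\cdot((n',m'),k')=((n,m)+(n',m')\varphi_\epsilon^k,\,k+k')$. A multiplier on a discrete group $\Gamma$ is a map $\sigma:\Gamma\times\Gamma\to U(1)$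 satisfying $\sigma(\gamma_1,\gamma_2)\sigma(\gamma_1\gamma_2,\gamma_3)=\sigma(\gamma_1,\gamma_2\gamma_3)\sigma(\gamma_2,\gamma_3)$ and $\sigma(\gamma,1)=\sigma(1,\gamma)=1$. *)

(* Defs.v *)
From HB Require Import structures.
From mathcomp Require Import all_boot all_order all_algebra.
From mathcomp Require Import all_classical all_reals.
From mathcomp Require Import trigo.
From mathcomp Require Import complex.
Set Implicit Arguments. Unset Strict Implicit. Unset Printing Implicit Defensive.
Import Order.TTheory GRing.Theory Num.Theory.
Local Open Scope ring_scope.
Local Open Scope complex_scope.

Section QuadField.
Variable R : realType.

Definition is_rational (x : R) : Prop := exists q : rat, x = ratr q.

Definition in_Qtheta (theta x : R) : Prop :=
  exists p q : rat, x = ratr p + ratr q * theta.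

(* theta generates a real quadratic field K = Q(theta) (inside R via the
   fixed real embedding): theta is irrational and of degree 2 over Q *)
Definition real_quadratic_generator (theta : R) : Prop :=
  ~ is_rational theta /\ in_Qtheta theta (theta ^+ 2).

(* Galois conjugate of x = p + q theta in Q(theta): if theta^2 = s + t theta
   then the other root of X^2 - tX - s is t - theta *)
Definition galois_conj (theta x : R) : R -> Prop := fun y =>
  exists s t p q : rat, theta ^+ 2 = ratr s + ratr t * theta /\
    x = ratr p + ratr q * theta /\ y = ratr p + ratr q * (ratr t - theta).

Definition alg_integer (x : R) : Prop :=
  exists p : {poly int}, p \is monic /\ root (map_poly intr p) x.

Definition is_unit_OK (theta e : R) : Prop :=
  in_Qtheta theta e /\ e != 0 /\ alg_integer e /\ alg_integer e^-1.

Definition totally_positive (theta e : R) : Prop :=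
  0 < e /\ forall e', galois_conj theta e e' -> 0 < e'.

Definition in_lattice (theta x : R) : Prop :=
  exists n m : int, x = n%:~R + m%:~R * theta.

Definition stabilizes_lattice (theta e : R) : Prop :=
  forall x, in_lattice theta x <-> exists y, in_lattice theta y /\ x = e * y.

End QuadField.

Definition phimx (a b c d : int) : 'M[int]_2 :=
  \matrix_(i < 2, j < 2)
    (if i == 0 then (if j == 0 then a else b) else (if j == 0 then c else d)).

Definition sdgrp := ('rV[int]_2 * int)%type.

Definition sdmul (phi : 'M[int]_2) (g h : sdgrp) : sdgrp :=
  (g.1 + h.1 *m (phi ^ g.2), g.2 + h.2).

Definition sdone : sdgrp := (0, 0).

Definition expi (R : realType) (t : R) : R[i] := (cos t) +i* (sin t).

Definition is_multiplier (R : realType) (G : Type) (mul : G -> G -> G) (one : G)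
    (s : G -> G -> R[i]) : Prop :=
  (forall g h, `|s g h| = 1) /\
  (forall g1 g2 g3, s g1 g2 * s (mul g1 g2) g3 = s g1 (mul g2 g3) * s g2 g3) /\
  (forall g, s g one = 1 /\ s one g = 1).

Definition sigma2 (R : realType) (xi1 xi2 : R) (x y : 'rV[int]_2) : R[i] :=
  expi (- (2 * pi) * (xi1 * (x 0 0)%:~R * (y 0 1)%:~R
                      + xi2 * (x 0 1)%:~R * (y 0 0)%:~R)).

Definition sigma_tilde (R : realType) (xi1 xi2 : R) (phi : 'M[int]_2)
    (g h : sdgrp) : R[i] :=
  sigma2 xi1 xi2 g.1 (h.1 *m (phi ^ g.2)).

(* Main.v *)
Require Import Defs.
From HB Require Import structures.
From mathcomp Require Import all_boot all_order all_algebra.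
From mathcomp Require Import all_classical all_reals.
From mathcomp Require Import trigo complex.
From mathcomp Require Import ring lra zify.
Import Order.TTheory GRing.Theory Num.Theory.
Local Open Scope ring_scope.

Lemma expiD (R : realType) (t u : R) : expi (t + u) = expi t * expi u.
Proof.
rewrite /expi cosD sinD /=; apply/eqP; rewrite eq_complex /=; apply/andP; split; apply/eqP; ring.
Qed.

Lemma norm_expi (R : realType) (t : R) : `|expi t| = 1.
Proof. by rewrite normc_def /= cos2Dsin2 sqrtr1. Qed.

Lemma expi0 (R : realType) : expi (0 : R) = 1.
Proof. by rewrite /expi cos0 sin0. Qed.

Definition Dform (x y : 'rV[int]_2) : int := x 0 0 * y 0 1 - x 0 1 * y 0 0.

Lemma det22 (A : 'M[int]_2) : \det A = A 0 0 * A 1 1 - A 0 1 * A 1 0.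
Proof.
rewrite (expand_det_row _ 0) !big_ord_recl big_ord0 /cofactor !det_mx11 !mxE /=.
have l1 : lift 0 (0:'I_1) = 1 :> 'I_2 by apply/val_inj.
have l2 : lift ord0 (ord0:'I_1) = 1 :> 'I_2 by apply/val_inj.
have l3 : lift (1:'I_2) (0:'I_1) = 0 :> 'I_2 by apply/val_inj.
rewrite ?l1 ?l2 ?l3 /= expr0 expr1 addr0 !mul1r mulN1r.
by rewrite mulrN.
Qed.

Lemma Dform_mul (x y : 'rV[int]_2) (M : 'M[int]_2) :
  Dform (x *m M) (y *m M) = \det M * Dform x y.
Proof.
rewrite det22 /Dform !mxE !big_ord_recl !big_ord0 /=.
have l1 : lift ord0 (ord0:'I_1) = 1 :> 'I_2 by apply/val_inj.
rewrite !l1 !addr0. ring.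
Qed.

Lemma DformDl x y z : Dform (x + y) z = Dform x z + Dform y z.
Proof. rewrite /Dform !mxE; ring. Qed.
Lemma DformDr x y z : Dform x (y + z) = Dform x y + Dform x z.
Proof. rewrite /Dform !mxE; ring. Qed.
Lemma Dform0l x : Dform 0 x = 0.
Proof. by rewrite /Dform !mxE !mul0r subr0. Qed.
Lemma Dform0r x : Dform x 0 = 0.
Proof. by rewrite /Dform !mxE !mulr0 subr0. Qed.

Lemma unit_det1 (M : 'M[int]_2) : \det M = 1 -> M \is a GRing.unit.
Proof. move=> h. have : M \in unitmx by rewrite unitmxE h unitr1. by []. Qed.

Lemma detXn (M : 'M[int]_2) n : \det (M ^+ n) = \det M ^+ n.
Proof.
elim: n => [|n IH]; first by rewrite !expr0 -[1 : 'M[int]_2]/(1%:M) det1.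
by rewrite !exprS -mulmxE det_mulmx IH.
Qed.

Lemma det_powz (M : 'M[int]_2) (k : int) : \det M = 1 -> \det (M ^ k) = 1.
Proof.
move=> h; case: k => n.
  by rewrite /exprz detXn h expr1n.
rewrite /exprz.
have -> : (M ^+ n.+1)^-1 = invmx (M ^+ n.+1) by [].
by rewrite det_inv detXn h expr1n invr1.
Qed.

Lemma sigma_tildeE (R : realType) (theta : R) phi g h :
  sigma_tilde (- (theta / 2)) (theta / 2) phi g h =
  expi (pi * theta * (Dform g.1 (h.1 *m phi ^ g.2))%:~R).
Proof.
rewrite /sigma_tilde /sigma2 /Dform; congr expi.
rewrite rmorphB !rmorphM /=. by field.
Qed.

Lemma multiplier_det1 (R : realType) (theta : R) (phi : 'M[int]_2) :
  \det phi = 1 ->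
  is_multiplier (sdmul phi) sdone (sigma_tilde (- (theta / 2)) (theta / 2) phi).
Proof.
move=> h; have u := @unit_det1 phi h.
split; [|split].
- by move=> g h'; rewrite sigma_tildeE norm_expi.
- move=> [x1 k1] [x2 k2] [x3 k3]; rewrite !sigma_tildeE /= -!expiD; congr expi.
  rewrite -!mulrDr -!rmorphD /=; congr (_ * _%:~R).
  have e : phi ^ (k1 + k2) = phi ^ k2 *m phi ^ k1.
    by rewrite mulmxE addrC exprzDr.
  rewrite e mulmxA !mulmxDl !DformDl !DformDr Dform_mul det_powz //.
  rewrite mul1r; ring.
- move=> [x k]; rewrite !sigma_tildeE /=; split.
    by rewrite mul0mx Dform0r mulr0 expi0.
  by rewrite Dform0l mulr0 expi0.
Qed.

Lemma irr_rat (R : realType) (theta : R) : ~ is_rational theta ->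
  forall u v : rat, ratr u + ratr v * theta = 0 -> u = 0 /\ v = 0.
Proof.
move=> hn u v e; have [v0|vn0] := eqVneq v 0.
  move: e; rewrite v0 rmorph0 mul0r addr0 => /eqP; rewrite fmorph_eq0 => /eqP //.
exfalso; apply: hn; exists (- u / v).
have hv : (ratr v : R) != 0 by rewrite fmorph_eq0.
rewrite rmorphM rmorphN fmorphV /=.
apply: (mulIf hv); rewrite -mulrA mulVf // mulr1 mulrC; apply/eqP; rewrite -addr_eq0 addrC; apply/eqP.
exact: e.
Qed.

Lemma irr_int (R : realType) (theta : R) : ~ is_rational theta ->
  forall u v : int, u%:~R + v%:~R * theta = 0 -> u = 0 /\ v = 0.
Proof.
move=> hn u v e; have := @irr_rat R theta hn (u%:~R) (v%:~R).
rewrite !ratr_int => /(_ e) [/eqP]; rewrite intr_eq0 => /eqP -> /eqP.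
by rewrite intr_eq0 => /eqP ->.
Qed.

Lemma int_one (X Y : int) : X * Y = 1 -> 0 < X -> X = 1.
Proof. move=> h p. have hY : 0 < Y by rewrite -(pmulr_rgt0 _ p) h. nia. Qed.

Theorem lemma4p3 (R : realType) (theta eps : R) (a b c d : int) :
  real_quadratic_generator theta ->
  is_unit_OK theta eps ->
  totally_positive theta eps ->
  stabilizes_lattice theta eps ->
  eps = a%:~R + b%:~R * theta ->
  eps * theta = c%:~R + d%:~R * theta ->
  is_multiplier (sdmul (phimx a b c d)) sdone
    (sigma_tilde (- (theta / 2)) (theta / 2) (phimx a b c d)).
Proof.
move=> [hirr [s [t hst]]] _ [epos hconj] hstab ea ec.
apply: multiplier_det1.
have -> : \det (phimx a b c d) = a * d - b * c by rewrite det22 !mxE.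
have [r1 r2] : (b%:~R * s - c%:~R = 0 :> rat) /\ (a%:~R + b%:~R * t - d%:~R = 0 :> rat).
  apply: (@irr_rat R theta hirr).
  rewrite !(rmorphB, rmorphD, rmorphM) /= !ratr_int.
  transitivity (b%:~R * (ratr s + ratr t * theta) + a%:~R * theta - (c%:~R + d%:~R * theta)); first by ring.
  by rewrite -hst -ec ea; ring.
have h1 : (c%:~R : R) = b%:~R * ratr s.
  move/eqP: r1; rewrite subr_eq0 => /eqP r1.
  by have := congr1 (ratr : rat -> R) r1; rewrite rmorphM /= !ratr_int.
have h2 : (d%:~R : R) = a%:~R + b%:~R * ratr t.
  move/eqP: r2; rewrite subr_eq0 => /eqP r2.
  by have := congr1 (ratr : rat -> R) r2; rewrite rmorphD rmorphM /= !ratr_int.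
have [y1 [[p [q ey1]] e1]] : exists y, in_lattice theta y /\ 1 = eps * y.
  by apply/(hstab 1); exists 1, 0; rewrite mul0r addr0.
have [y2 [[p2 [q2 ey2]] e2]] : exists y, in_lattice theta y /\ theta = eps * y.
  by apply/(hstab theta); exists 0, 1; rewrite add0r mul1r.
have [u1 v1] : p * a + q * c - 1 = 0 /\ p * b + q * d = 0.
  apply: (@irr_int R theta hirr).
  have z : eps * y1 - 1 = 0 by rewrite -e1 subrr.
  rewrite -z ey1 !(rmorphB, rmorphD, rmorphM) /=.
  transitivity (p%:~R * (a%:~R + b%:~R * theta) + q%:~R * (c%:~R + d%:~R * theta) - 1 : R); first by ring.
  by rewrite -ea -ec; ring.
have [u2 v2] : p2 * a + q2 * c = 0 /\ p2 * b + q2 * d - 1 = 0.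
  apply: (@irr_int R theta hirr).
  have z : eps * y2 - theta = 0 by rewrite -e2 subrr.
  rewrite -z ey2 !(rmorphB, rmorphD, rmorphM) /=.
  transitivity (p2%:~R * (a%:~R + b%:~R * theta) + q2%:~R * (c%:~R + d%:~R * theta) - theta : R); first by ring.
  by rewrite -ea -ec; ring.
have hdet : (a * d - b * c) * (p * q2 - q * p2) = 1.
  transitivity ((p * a + q * c) * (p2 * b + q2 * d) - (p * b + q * d) * (p2 * a + q2 * c)); first by ring.
  have -> : p * a + q * c = 1 by move/eqP: u1; rewrite subr_eq0 => /eqP.
  have -> : p2 * b + q2 * d = 1 by move/eqP: v2; rewrite subr_eq0 => /eqP.
  by rewrite v1 u2 mul0r subr0 mulr1.
have pos : 0 < a * d - b * c.
  have hc := hconj (a%:~R + b%:~R * (ratr t - theta)).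
  have he' : 0 < a%:~R + b%:~R * (ratr t - theta) :> R.
    apply: hc; exists s, t, a%:~R, b%:~R; rewrite !ratr_int; split=> //.
  have := mulr_gt0 epos he'.
  have -> : eps * (a%:~R + b%:~R * (ratr t - theta)) = (a * d - b * c)%:~R.
    rewrite !(rmorphB, rmorphM) /= h1 h2 ea.
    have hs : ratr s = theta ^+ 2 - ratr t * theta by rewrite hst; ring.
    rewrite hs; ring.
  by rewrite ltr0z.
exact: (int_one _ _ hdet pos).
Qed.
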